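(* Let $\tau$ be an infinite cardinal and $X$ a space with $\chi(X)\le\tau$. There is no continuous, effective and transitive action on $X$ of a topological group $G$ with $\psi(G)>\tau$ and $\mathrm{inv}(G)\le\tau$.
   Context: All spaces are Tychonoff. An action of $G$ on $X$ is effective if the only $g\in G$ with $gx=x$ for all $x\in X$ is the unit, and transitive if $Gx=X$. $\psi(G)$ is the pseudocharacter of $G$. The invariance number $\mathrm{inv}(G)$ is the least infinite cardinal $\tau$ such that for every neighborhood $U$ of the unit there is a family $\gamma$ of at most $\tau$ neighborhoods of the unit such that for each $x\in G$ some $V\in\gamma$ satisfies $xVx^{-1}\subset U$. *)

(* Defs.v *)
From HB Require Import structures.
From mathcomp Require Import all_boot all_order all_algebra.
From mathcomp Require Import all_classical all_reals all_analysis.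
Set Implicit Arguments. Unset Strict Implicit. Unset Printing Implicit Defensive.
Import Order.TTheory GRing.Theory Num.Theory.
Local Open Scope classical_set_scope.
Local Open Scope card_scope.

Definition tychonoff_space (T : topologicalType) : Prop :=
  accessible_space T /\ completely_regular_space T.

Definition is_topological_group (G : topologicalType)
    (mul : G -> G -> G) (inv : G -> G) (one : G) : Prop :=
  [/\ (forall x y z, mul x (mul y z) = mul (mul x y) z),
      (forall x, mul one x = x /\ mul x one = x),
      (forall x, mul (inv x) x = one /\ mul x (inv x) = one),
      continuous (fun p : G * G => mul p.1 p.2) &
      continuous inv].

Definition is_continuous_action (G X : topologicalType)
    (mul : G -> G -> G) (one : G) (act : G -> X -> X) : Prop :=
  [/\ (forall x, act one x = x),
      (forall g h x, act (mul g h) x = act g (act h x)) &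
      continuous (fun p : G * X => act p.1 p.2)].

Definition effective_action (G X : Type) (one : G) (act : G -> X -> X) : Prop :=
  forall g, (forall x, act g x = x) -> g = one.

Definition transitive_action (G X : Type) (act : G -> X -> X) : Prop :=
  forall x y : X, exists g, act g x = y.

(* The cardinal tau is represented by (the cardinality of) a type K. *)

Definition character_le (X : topologicalType) (K : Type) : Prop :=
  forall x : X, exists B : set (set X),
    B #<= [set: K] /\
    (forall U, B U -> open U /\ U x) /\
    (forall V, nbhs x V -> exists2 U, B U & U `<=` V).

Definition pseudocharacter_le (X : topologicalType) (K : Type) : Prop :=
  forall x : X, exists g : set (set X),
    g #<= [set: K] /\
    (forall U, g U -> open U /\ U x) /\
    \bigcap_(U in g) U = [set x].

Definition invariance_le (G : topologicalType) (mul : G -> G -> G)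
    (inv : G -> G) (one : G) (K : Type) : Prop :=
  forall U, nbhs one U -> exists g : set (set G),
    g #<= [set: K] /\
    (forall V, g V -> nbhs one V) /\
    (forall x : G, exists2 V, g V & forall v, V v -> U (mul (mul x v) (inv x))).

(* Main.v *)
Require Import Defs.
From HB Require Import structures.
From mathcomp Require Import all_boot all_order all_algebra.
From mathcomp Require Import all_classical all_reals all_analysis.
Local Open Scope classical_set_scope.
Local Open Scope card_scope.

Lemma card_le_make T U (A : set T) (B : set U) (f : T -> U) :
  (forall x, A x -> B (f x)) -> (forall x y, A x -> A y -> f x = f y -> x = y) ->
  A #<= B.
Proof.
move=> fAB finj.
have : $|{injfun A >-> B}|.
  apply/injfunPex; exists f => //; move=> x y; rewrite !inE => xA yA; exact: finj.
by case=> g; apply: inj_card_le g.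
Qed.

Lemma card_le_total T U (X : set T) (Y : set U) : X #<= Y \/ Y #<= X.
Proof.
have [->|/set0P[x0 _]] := eqVneq X set0; first by left.
have [->|/set0P[y0 _]] := eqVneq Y set0; first by right.
pose P (G : set (T * U)) := [/\ G `<=` X `*` Y,
   (forall a b b', G (a, b) -> G (a, b') -> b = b') &
   (forall a a' b, G (a, b) -> G (a', b) -> a = a')].
have [M [[MXY Mf Mi] Mmax]] : exists A, P A /\ forall B, A `<` B -> ~ P B.
  apply: Zorn_bigcup => F FP Ftot; split.
  - by move=> q [G FG Gq]; have [s _ _] := FP G FG; exact: s.
  - move=> a b b' [G1 FG1 G1q] [G2 FG2 G2q].
    have [s12|s21] := Ftot _ _ FG1 FG2.
      by have [_ f _] := FP G2 FG2; apply: f (s12 _ G1q) G2q.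
    by have [_ f _] := FP G1 FG1; apply: f G1q (s21 _ G2q).
  - move=> a a' b [G1 FG1 G1q] [G2 FG2 G2q].
    have [s12|s21] := Ftot _ _ FG1 FG2.
      by have [_ _ f] := FP G2 FG2; apply: f (s12 _ G1q) G2q.
    by have [_ _ f] := FP G1 FG1; apply: f G1q (s21 _ G2q).
have [hX|hX] := pselect (forall x, X x -> exists y, M (x, y)).
  left.
  have [f hf] : {f : T -> U & forall x, X x -> M (x, f x)}.
    apply: (@choice T U (fun x y => X x -> M (x, y))) => x; have [h|h] := pselect (X x).
      by have [y hy] := hX x h; exists y.
    by exists y0.
  apply: (@card_le_make _ _ _ _ f).
    by move=> x Xx; have [] := MXY _ (hf x Xx).
  by move=> x y Xx Xy fxy; apply: (Mi x y (f x)) => //; [apply: hf | rewrite fxy; apply: hf].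
have [hY|hY] := pselect (forall y, Y y -> exists x, M (x, y)).
  right.
  have [f hf] : {f : U -> T & forall y, Y y -> M (f y, y)}.
    apply: (@choice U T (fun y x => Y y -> M (x, y))) => y; have [h|h] := pselect (Y y).
      by have [x hx] := hY y h; exists x.
    by exists x0.
  apply: (@card_le_make _ _ _ _ f).
    by move=> y Yy; have [] := MXY _ (hf y Yy).
  by move=> x y Xx Xy fxy; apply: (Mf (f x) x y) => //; [apply: hf | rewrite fxy; apply: hf].
exfalso.
move/existsNP: hX => [x /not_implyP [Xx /forallNP nx]].
move/existsNP: hY => [y /not_implyP [Yy /forallNP ny]].
apply: (Mmax (M `|` [set (x, y)])).
  split; first by move=> q Mq; left.
  by move=> /(_ (x, y) (or_intror erefl)) /nx.
split.
- by move=> q [/MXY //|->].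
- move=> a b b' [Mab|[? ?]] [Mab'|[? ?]]; subst => //.
  + exact: Mf Mab Mab'.
  + by move: Mab => /nx.
  + by move: Mab' => /nx.
- move=> a a' b [Mab|[? ?]] [Mab'|[? ?]]; subst => //.
  + exact: Mi Mab Mab'.
  + by move: Mab => /ny.
  + by move: Mab' => /ny.
Qed.
Definition pK {K : Type} (k : K) := K.
HB.instance Definition _ (K : Type) (k : K) := gen_eqMixin (pK k).
HB.instance Definition _ (K : Type) (k : K) := gen_choiceMixin (pK k).
HB.instance Definition _ (K : Type) (k : K) := isPointed.Build (pK k) k.

Lemma card_le_get T K (k : K) (A : set T) :
  A #<= [set: K] -> exists f : T -> K, forall x y, A x -> A y -> f x = f y -> x = y.
Proof.
move=> h.
have := @pcard_injP T (pK k) A.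
move=> /(_ h) -[f finj].
by exists f => x y xA yA; apply: finj; rewrite inE.
Qed.

Section Hess.
Variable T : Type.
Hypothesis Tinf : infinite_set [set: T].

Definition good (G : set ((T * T) * T)) :=
  [/\ (forall p a b, G (p, a) -> G (p, b) -> a = b),
      (forall p q a, G (p, a) -> G (q, a) -> p = q),
      (forall x y, (exists a, G ((x, y), a)) <->
          ((exists a, G ((x, x), a)) /\ (exists a, G ((y, y), a)))) &
      (forall p a, G (p, a) -> exists b, G ((a, a), b))].

Lemma good_chain (F : set (set ((T * T) * T))) :
  (forall G, F G -> good G) -> total_on F subset -> good (\bigcup_(G in F) G).
Proof.
move=> Fg Ftot; split.
- move=> p a b [G1 FG1 G1q] [G2 FG2 G2q].
  have [s12|s21] := Ftot _ _ FG1 FG2.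
    by have [f _ _ _] := Fg G2 FG2; apply: f (s12 _ G1q) G2q.
  by have [f _ _ _] := Fg G1 FG1; apply: f G1q (s21 _ G2q).
- move=> p q a [G1 FG1 G1q] [G2 FG2 G2q].
  have [s12|s21] := Ftot _ _ FG1 FG2.
    by have [_ f _ _] := Fg G2 FG2; apply: f (s12 _ G1q) G2q.
  by have [_ f _ _] := Fg G1 FG1; apply: f G1q (s21 _ G2q).
- move=> x y; split.
    move=> [a [G FG Ga]]; have [_ _ f _] := Fg G FG.
    have [[b Gb] [c Gc]] := (f x y).1 (ex_intro _ a Ga).
    by split; [exists b; exists G | exists c; exists G].
  move=> [[b [G1 FG1 G1b]] [c [G2 FG2 G2c]]].
  have [s12|s21] := Ftot _ _ FG1 FG2.
    have [_ _ f _] := Fg G2 FG2.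
    have [a Ga] := (f x y).2 (conj (ex_intro _ b (s12 _ G1b)) (ex_intro _ c G2c)).
    by exists a; exists G2.
  have [_ _ f _] := Fg G1 FG1.
  have [a Ga] := (f x y).2 (conj (ex_intro _ b G1b) (ex_intro _ c (s21 _ G2c))).
  by exists a; exists G1.
- move=> p a [G FG Ga]; have [_ _ _ f] := Fg G FG.
  by have [b Gb] := f p a Ga; exists b; exists G.
Qed.


Lemma card_le_get2 U (u0 : U) (A : set T) (B : set U) :
  A #<= B -> exists f : T -> U, (forall x, A x -> B (f x)) /\
     (forall x y, A x -> A y -> f x = f y -> x = y).
Proof.
move=> h.
have := @pcard_leP T (pK u0) A B.
move=> /(_ h) /injfunPex [f fAB finj].
exists f; split; first by move=> x Ax; apply: fAB.
by move=> x y xA yA; apply: finj; rewrite inE.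
Qed.

Lemma hessenberg : [set: T * T] #<= [set: T].
Proof.
have [t0 _] : [set: T] !=set0 := infinite_setN0 Tinf.
have /infiniteP hn := Tinf.
have [e einj'] := @card_le_get _ _ t0 _ hn.
have einj : injective e by move=> x y; apply: einj'.
pose F0 := [set q | exists i j, q = ((e i, e j), e (pickle (i, j)))].
have F0g : good F0.
  split.
  - by move=> p a b [i [j [-> ->]]] [i' [j' [/einj <- /einj <- ->]]].
  - move=> p q a [i [j [-> ->]]] [i' [j' [-> E]]].
    by move/einj/(pcan_inj pickleK): E => [<- <-].
  - move=> x y; split.
      move=> [a [i [j E]]]; case: E => -> -> _.
      by split; [exists (e (pickle (i, i))); exists i, i | exists (e (pickle (j, j))); exists j, j].
    move=> [[a [i [j E]]] [b [i' [j' E']]]].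
    case: E => -> _ _; case: E' => -> _ _.
    by exists (e (pickle (i, i'))); exists i, i'.
  - move=> p a [i [j [? ->]]].
    by exists (e (pickle (pickle (i, j), pickle (i, j)))); exists (pickle (i, j)), (pickle (i, j)).
pose P G := good G /\ (G = set0 \/ F0 `<=` G).
have [M [[Mg M0] Mmax]] : exists A, P A /\ forall B, A `<` B -> ~ P B.
  apply: Zorn_bigcup => F FP Ftot; split.
    by apply: good_chain => // G /FP [].
  have [[G [FG sub]]|no] := pselect (exists G, F G /\ F0 `<=` G).
    by right => q /sub Gq; exists G.
  left; apply/seteqP; split => // q [G FG Gq].
  have [_ [G0|sub]] := FP G FG; first by rewrite G0 in Gq.
  by exfalso; apply: no; exists G.
have MF0 : F0 `<=` M.
  case: M0 => // M0; exfalso; apply: (Mmax F0); last by split => //; right.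
  rewrite M0; split => // /(_ ((e 0, e 0), e (pickle (0, 0))))-H; apply: H.
  by exists 0, 0.
case: Mg => Mf Mi Md Mr.
pose A x := exists a, M ((x, x), a).
have eA i : A (e i) by exists (e (pickle (i, i))); apply: MF0; exists i, i.
have [h hM] : {h : T * T -> T & forall p, A p.1 -> A p.2 -> M (p, h p)}.
  apply: (@choice (T * T) T (fun p a => A p.1 -> A p.2 -> M (p, a))) => -[x y].
  have [[Ax Ay]|nA] := pselect (A x /\ A y).
    by have [a Ma] := (Md x y).2 (conj Ax Ay); exists a.
  by exists t0 => /= Ax Ay; exfalso; apply: nA.
have hA x y : A x -> A y -> A (h (x, y)).
  by move=> Ax Ay; apply: (Mr (x, y)); apply: hM.
have hinj x y x' y' : A x -> A y -> A x' -> A y' -> h (x, y) = h (x', y') ->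
    x = x' /\ y = y'.
  move=> Ax Ay Ax' Ay' E.
  have := Mi (x, y) (x', y') (h (x, y)) (hM (x, y) Ax Ay).
  by rewrite E => /(_ (hM (x', y') Ax' Ay')) [-> ->].
have MA x y a : M ((x, y), a) -> A x /\ A y.
  by move=> Ma; apply: (Md x y).1; exists a.
have e01 : e 0 <> e 1 by move/einj.
have e02 : e 0 <> e 2 by move/einj.
have e12 : e 1 <> e 2 by move/einj.
have [Ac|cA] := @card_le_total _ _ (~` A) A.
  have [g [gA ginj]] := @card_le_get2 _ t0 _ _ Ac.
  pose k t := if pselect (A t) then h (t, e 0) else h (g t, e 1).
  have kA t : A (k t).
    by rewrite /k; case: pselect => At; apply: hA => //; apply: gA.
  have kinj x y : k x = k y -> x = y.
    rewrite /k; case: pselect => Ax; case: pselect => Ay.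
    - by move/hinj => /(_ Ax (eA 0) Ay (eA 0)) [].
    - by move/hinj => /(_ Ax (eA 0) (gA _ Ay) (eA 1)) [_ /e01].
    - by move/hinj => /(_ (gA _ Ax) (eA 1) Ay (eA 0)) [_ /esym/e01].
    - move/hinj => /(_ (gA _ Ax) (eA 1) (gA _ Ay) (eA 1)) [+ _].
      by apply: ginj.
  apply: (@card_le_make _ _ _ _ (fun p => h (k p.1, k p.2))) => // -[x y] [x' y'] _ _ /=.
  by move/hinj => /(_ (kA _) (kA _) (kA _) (kA _)) [/kinj -> /kinj ->].
have [g [gA ginj]] := @card_le_get2 _ t0 _ _ cA.
pose A' z := A z \/ exists a, A a /\ z = g a.
have [gi giP] : {gi : T -> T & forall z, (exists a, A a /\ z = g a) -> A (gi z) /\ z = g (gi z)}.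
  apply: (@choice T T (fun z b => (exists a, A a /\ z = g a) -> A b /\ z = g b)) => z.
  have [[a [Aa za]]|nz] := pselect (exists a, A a /\ z = g a).
    by exists a.
  by exists t0.
pose r z := if pselect (A z) then z else gi z.
have rE1 z : A z -> r z = z by rewrite /r; case: pselect.
have rE2 z : ~ A z -> r z = gi z by rewrite /r; case: pselect.
have rA z : A' z -> A (r z).
  have [Az _|Az [//|/giP[]//]] := pselect (A z); first by rewrite rE1.
  by rewrite rE2.
have rinj z z' : A' z -> A' z' -> (A z <-> A z') -> r z = r z' -> z = z'.
  have [Az|Az] := pselect (A z); have [Az'|Az'] := pselect (A z').
  - by rewrite !rE1.
  - by move=> _ _ [/(_ Az)].
  - by move=> _ _ [_ /(_ Az')].
  rewrite !rE2 //.
  move=> [//|/giP [_ Ez]] [//|/giP [_ Ez']] _ E.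
  by rewrite Ez Ez' E.
pose c p := if `[< A p.1 >] then e 1 else if `[< A p.2 >] then e 0 else e 2.
have cA' p : A (c p) by rewrite /c; case: ifP => _; [|case: ifP => _].
pose w p := h (h (r p.1, r p.2), c p).
have wA p : A' p.1 -> A' p.2 -> A (w p).
  by move=> A1 A2; apply: (hA) => //; apply: (hA); apply: (rA).
pose N := [set q : (T * T) * T | [/\ A' q.1.1, A' q.1.2, ~ (A q.1.1 /\ A q.1.2) & q.2 = g (w q.1)]].
have gnA a : A a -> ~ A (g a) by move=> Aa; apply: gA.
pose M' := M `|` N.
have D'E z : (exists a, M' ((z, z), a)) <-> A' z.
  split.
    by move=> [a [Ma|[Az _ _ _]]]; [left; exists a | exact: Az].
  move=> Az'; have [Az|nAz] := pselect (A z).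
    by exists (h (z, z)); left; apply: hM.
  by exists (g (w (z, z))); right; split => // -[].
have MN p a b : M (p, a) -> N (p, b) -> False.
  by case: p => x y Ma [_ _ nb _]; apply: nb; apply: MA Ma.
have AN p a : N (p, a) -> ~ A a.
  by move=> [A1 A2 _ /= ->]; apply: gnA; apply: wA.
have cpat x y x' y' : ~ (A x /\ A y) -> ~ (A x' /\ A y') -> c (x, y) = c (x', y') ->
    (A x <-> A x') /\ (A y <-> A y').
  rewrite /c /=.
  case: (asboolP (A x)) => Ax; case: (asboolP (A y)) => Ay;
  case: (asboolP (A x')) => Ax'; case: (asboolP (A y')) => Ay';
  move=> nb nb' /einj E; try discriminate E; tauto.
have gM' : good M'.
  split.
  - move=> p a b [Ma|Na] [Mb|Nb].
    + exact: Mf Ma Mb.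
    + by exfalso; apply: MN Ma Nb.
    + by exfalso; apply: MN Mb Na.
    + by case: Na => _ _ _ /= ->; case: Nb => _ _ _ /= ->.
  - move=> p q a [Ma|Na] [Mb|Nb].
    + exact: Mi Ma Mb.
    + by exfalso; apply: (AN _ _ Nb); apply: Mr Ma.
    + by exfalso; apply: (AN _ _ Na); apply: Mr Mb.
    + case: p Na => x y [/= Ax Ay nxy Ea]; case: q Nb => x' y' [/= Ax' Ay' nxy' Eb].
      have := ginj _ _ (wA (x, y) Ax Ay) (wA (x', y') Ax' Ay').
      rewrite -Ea -Eb => /(_ erefl).
      rewrite /w /= => E0.
      have [E1 Ec] := hinj _ _ _ _ (hA _ _ (rA _ Ax) (rA _ Ay)) (cA' (x, y))
        (hA _ _ (rA _ Ax') (rA _ Ay')) (cA' (x', y')) E0.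
      have [Ex Ey] := hinj _ _ _ _ (rA _ Ax) (rA _ Ay) (rA _ Ax') (rA _ Ay') E1.
      have [ix iy] := cpat _ _ _ _ nxy nxy' Ec.
      by rewrite (rinj _ _ Ax Ax' ix Ex) (rinj _ _ Ay Ay' iy Ey).
  - move=> x y; split.
      move=> [a [Ma|[A1 A2 _ _]]]; last by split; apply/D'E.
      by have [Ax Ay] := MA _ _ _ Ma; split; apply/D'E; left.
    move=> [/D'E Ax /D'E Ay]; have [[Ax0 Ay0]|nb] := pselect (A x /\ A y).
      by exists (h (x, y)); left; apply: hM.
    by exists (g (w (x, y))); right; split.
  - move=> p a [Ma|Na]; apply/D'E.
      by left; apply: Mr Ma.
    by case: Na => A1 A2 _ /= ->; right; exists (w p); split => //; apply: wA.
exfalso; apply: (Mmax M'); last by split => //; right => q /MF0 Mq; left.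
split; first by move=> q Mq; left.
pose z := g (e 0).
have nAz : ~ A z by apply: gnA.
move=> /(_ ((z, z), g (w (z, z)))) H.
have : M ((z, z), g (w (z, z))).
  apply: H; right; split => //=; first by right; exists (e 0).
    by right; exists (e 0).
  by case.
by move/MA => [].
Qed.

End Hess.
Lemma cont_l (A B C : topologicalType) (h : A * B -> C) (b : B) :
  continuous h -> continuous (fun a => h (a, b)).
Proof.
move=> hc a.
apply: (@continuous_comp _ _ _ (fun a => (a, b)) h); last exact: hc.
exact: (cvg_pair cvg_id (cvg_cst b)).
Qed.
Lemma cont_r (A B C : topologicalType) (h : A * B -> C) (a : A) :
  continuous h -> continuous (fun b => h (a, b)).
Proof.
move=> hc b.
apply: (@continuous_comp _ _ _ (fun b => (a, b)) h); last exact: hc.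
exact: (cvg_pair (cvg_cst a) cvg_id).
Qed.

Local Close Scope card_scope.

Theorem corollary3p10 (K : Type) (X G : topologicalType)
    (mul : G -> G -> G) (inv : G -> G) (one : G) (act : G -> X -> X) :
  infinite_set [set: K] ->
  tychonoff_space X -> tychonoff_space G ->
  character_le X K ->
  is_topological_group mul inv one ->
  ~ pseudocharacter_le G K ->
  invariance_le mul inv one K ->
  ~ [/\ is_continuous_action mul one act,
        effective_action one act &
        transitive_action act].
Proof.
move=> Kinf [X1 _] _ chX [massoc munit minv mcont icont] npsi invle
  [[act1 actM actc] eff trans].
apply: npsi => z.
have [k0 _] : [set: K] !=set0 := infinite_setN0 Kinf.
have KK := @hessenberg K Kinf.
have act_inv b x : act (inv b) (act b x) = x.
  by rewrite -actM (minv b).1 act1.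
have zz : mul (inv z) z = one by rewrite (minv z).1.
have [[x0 _]|noX] := pselect (exists x0 : X, True); last first.
  have all1 g : g = one.
    by apply: eff => x; exfalso; apply: noX; exists x.
  exists [set setT]; split; last split.
  - apply: (@card_le_make _ _ _ _ (fun _ => k0)) => // x y -> ->.
    by [].
  - by move=> U ->; split => //; apply: openT.
  - apply/seteqP; split => y /=.
      by move=> _; rewrite (all1 y) (all1 z).
    by move=> -> U ->.
have [B [BK [Bo Bb]]] := chX x0.
pose W U := [set g | U (act g x0)].
have actc0 : continuous (fun g => act g x0).
  exact: (@cont_l _ _ _ (fun p : G * X => act p.1 p.2) x0 actc).
have mulc : continuous (fun y => mul (inv z) y).
  exact: (@cont_r _ _ _ (fun p : G * G => mul p.1 p.2) (inv z) mcont).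
have WN U : B U -> nbhs one (W U).
  move=> BU; have [Uo Ux] := Bo U BU.
  have : nbhs (act one x0) U by rewrite act1; apply: open_nbhs_nbhs.
  by move=> h; apply: (actc0 one).
have [gam gamP] : {gam : set X -> set (set G) & forall U, B U ->
    [/\ (gam U #<= [set: K])%card, (forall V, gam U V -> nbhs one V) &
      (forall x, exists2 V, gam U V & forall v, V v -> W U (mul (mul x v) (inv x)))]}.
  apply: (@choice _ _ (fun U g => B U ->
    [/\ (g #<= [set: K])%card, (forall V, g V -> nbhs one V) &
      (forall x, exists2 V, g V & forall v, V v -> W U (mul (mul x v) (inv x)))])) => U.
  have [BU|nBU] := pselect (B U); last by exists set0.
  have [g [h1 [h2 h3]]] := invle _ (WN U BU).
  by exists g => _; split.
pose Q := [set p : set X * set G | B p.1 /\ gam p.1 p.2].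
pose phi (p : set X * set G) := [set y | (interior p.2) (mul (inv z) y)].
have phiz p : Q p -> phi p z.
  case: p => U V [/= BU gV]; rewrite /phi /= zz.
  by have [_ h _] := gamP U BU; apply: h.
exists (phi @` Q); split; last split.
- apply: (card_le_trans (card_image_le phi Q)).
  apply: (@card_le_trans _ _ _ [set: K * K]) => //.
  have [iB iBinj] := @card_le_get _ _ k0 _ BK.
  have [iG iGP] : {iG : set X -> set G -> K & forall U, B U ->
      forall V V', gam U V -> gam U V' -> iG U V = iG U V' -> V = V'}.
    apply: (@choice _ _ (fun U f => B U ->
      forall V V', gam U V -> gam U V' -> f V = f V' -> V = V')) => U.
    have [BU|nBU] := pselect (B U); last by exists (fun _ => k0).
    have [h1 _ _] := gamP U BU.
    have [f finj] := @card_le_get _ _ k0 _ h1.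
    by exists f => _; apply: finj.
  apply: (@card_le_make _ _ _ _ (fun p => (iB p.1, iG p.1 p.2))) => //.
  move=> [U V] [U' V'] [/= BU gV] [/= BU' gV'] [E1].
  have eU := iBinj _ _ BU BU' E1; subst U'.
  by move=> E2; rewrite (iGP U BU V V' gV gV' E2).
- move=> S [p Qp <-]; split; last exact: phiz.
  apply: open_comp; last exact: open_interior.
  by move=> y _; apply: mulc.
- apply/seteqP; split => y /=; last first.
    by move=> -> S [p Qp <-]; apply: phiz.
  move=> Hy.
  pose g := mul (inv z) y.
  have gV U V : B U -> gam U V -> V g.
    move=> BU gV; apply: interior_subset.
    by have := Hy (phi (U, V)) (ex_intro2 _ _ (U, V) (conj BU gV) erefl).
  have g1 : g = one.
    apply: eff => x; have [b bx] := trans x x0.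
    have fx : act (mul (mul b g) (inv b)) x0 = x0.
      apply: contrapT => ne.
      have [Op [Oo Ox0 Ou]] := X1 x0 (act (mul (mul b g) (inv b)) x0)
        (introN eqP (fun e => ne (esym e))).
      have [U BU UO] := Bb Op (open_nbhs_nbhs (conj Oo (set_mem Ox0))).
      have [_ _ h3] := gamP U BU.
      have [V gVV HV] := h3 b.
      have := UO _ (HV g (gV U V BU gVV)).
      by move: Ou; rewrite inE.
    move: fx; rewrite !actM -bx act_inv => fx.
    by have := congr1 (act (inv b)) fx; rewrite !act_inv.
  have : mul z g = mul z one by rewrite g1.
  rewrite /g massoc (minv z).2 (munit y).1 (munit z).2 => ->.
  by [].
Qed.
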